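(* The twi-distance $\delta^*:\mathcal{T}^*\times\mathcal{T}^*\to\mathbb{R}_{\ge0}$, $\delta^*([x],[y])=\inf_{x'\in[x]}\inf_{y'\in[y]}\delta(x',y')$, is well defined and is a semi-metric on $\mathcal{T}^*$, and it satisfies $\delta^*([x],[y])=\delta(x^*,y^* )$ for all $x,y\in\mathcal{T}$, where $x^*,y^*$ are the condensed forms of $x,y$.
   Context: A time series of length $n\ge1$ is a finite real sequence; $\mathcal{T}$ is the set of all time series of finite length. For $m,n\in\mathbb{N}$, a warping path of order $m\times n$ is a sequence $p=(p_1,\dots,p_\ell)$ of points in $[m]\times[n]$ ($[n]=\{1,\dots,n\}$) with $p_1=(1,1)$, $p_\ell=(m,n)$, $p_{l+1}-p_l\in\{(1,0),(0,1),(1,1)\}$; $\mathcal{P}_{m,n}$ is the set of these. The dtw-distance of $x$ (length $m$) and $y$ (length $n$) is $\delta(x,y)=\min_{p\in\mathcal{P}_{m,n}}\big(\sum_{(i,j)\in p}(x_i-y_j)^2\big)^{1/2}$. Warping identification is the relation $x\sim y\iff\delta(x,y)=0$, which is an equivalence relation; $[x]=\{y\in\mathcal{T}:x\sim y\}$ and $\mathcal{T}^*=\{[x]:x\in\mathcal{T}\}$ is the quotient set. A time series $x'$ is an expansion of $x=(x_1,\dots,x_n)$, written $x'\succ x$, if there are integers $\alpha_i\ge1$ with $x'=(x_1^{(\alpha_1)},\dots,x_n^{(\alpha_n)})$, where $x_i^{(\alpha_i)}$ denotes $\alpha_i$ consecutive copies of $x_i$. A time series is irreducible if no two consecutive elements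 are equal. The condensed form $x^*$ of $x$ is the unique irreducible time series with $x\succ x^*$ (obtained by collapsing maximal runs of equal consecutive values). A semi-metric on a set $X$ is a function $d:X\times X\to\mathbb{R}$ with $d\ge0$, $d(a,b)=0\iff a=b$, and $d(a,b)=d(b,a)$. *)

(* Defs.v *)
From Stdlib Require Import Reals Lra List ClassicalEpsilon.
Import ListNotations.
Open Scope R_scope.

Definition ts : Type := { x : list R | (1 <= length x)%nat }.

(** Warping paths of order m x n (1-indexed points). *)
Definition wstep (p q : nat * nat) : Prop :=
  (fst q = S (fst p) /\ snd q = snd p) \/
  (fst q = fst p /\ snd q = S (snd p)) \/
  (fst q = S (fst p) /\ snd q = S (snd p)).

Fixpoint wsteps (p : list (nat * nat)) : Prop :=
  match p with
  | a :: ((b :: _) as t) => wstep a b /\ wsteps t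
  | _ => True
  end.

Definition warping_path (m n : nat) (p : list (nat * nat)) : Prop :=
  hd_error p = Some (1%nat, 1%nat) /\
  last p (0%nat, 0%nat) = (m, n) /\
  wsteps p /\
  Forall (fun ij => (1 <= fst ij <= m)%nat /\ (1 <= snd ij <= n)%nat) p.

Definition path_cost (x y : list R) (p : list (nat * nat)) : R :=
  fold_right (fun ij acc =>
    (nth (pred (fst ij)) x 0 - nth (pred (snd ij)) y 0) ^ 2 + acc) 0 p.

Definition is_dtw (x y : list R) (d : R) : Prop :=
  (exists p, warping_path (length x) (length y) p /\ d = sqrt (path_cost x y p)) /\
  (forall p, warping_path (length x) (length y) p -> d <= sqrt (path_cost x y p)).

Definition dtw (x y : list R) : R := epsilon (inhabits 0) (is_dtw x y).

Definition widen (x y : ts) : Prop := dtw (proj1_sig x) (proj1_sig y) = 0.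

Definition cls (x : ts) : ts -> Prop := fun y => widen x y.

Definition Tstar : Type := { A : ts -> Prop | exists x : ts, A = cls x }.

Definition toT (x : ts) : Tstar := exist _ (cls x) (ex_intro _ x eq_refl).

Definition is_glb (S : R -> Prop) (r : R) : Prop :=
  (forall s, S s -> r <= s) /\ (forall b, (forall s, S s -> b <= s) -> b <= r).

Definition Rinf (S : R -> Prop) : R := epsilon (inhabits 0) (is_glb S).

Definition twi_set (A B : ts -> Prop) : R -> Prop :=
  fun r => exists x' y', A x' /\ B y' /\ r = dtw (proj1_sig x') (proj1_sig y').

Definition twi (A B : Tstar) : R := Rinf (twi_set (proj1_sig A) (proj1_sig B)).

(** Condensed form: collapse maximal runs of equal consecutive values. *)
Fixpoint condense (x : list R) : list R :=
  match x with
  | [] => []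
  | a :: t =>
      match condense t with
      | [] => [a]
      | b :: t' => if Req_EM_T a b then b :: t' else a :: b :: t'
      end
  end.

Definition semi_metric (X : Type) (d : X -> X -> R) : Prop :=
  (forall a b, 0 <= d a b) /\
  (forall a b, d a b = 0 <-> a = b) /\
  (forall a b, d a b = d b a).

(* Main.v *)
Require Import Defs.
From Stdlib Require Import Reals List.
From Stdlib Require Import Lra Lia Psatz ClassicalEpsilon ProofIrrelevance FunctionalExtensionality PropExtensionality.
Import ListNotations.
Open Scope R_scope.

Inductive align : list R -> list R -> R -> Prop :=
| al_base a b : align [a] [b] ((a-b)^2)
| al_down a b x y c : align x (b::y) c -> align (a::x) (b::y) ((a-b)^2 + c)
| al_right a b x y c : align (a::x) y c -> align (a::x) (b::y) ((a-b)^2 + c)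
| al_diag a b x y c : align x y c -> align (a::x) (b::y) ((a-b)^2 + c).

Lemma align_eq x y c c' : align x y c -> c = c' -> align x y c'.
Proof. intros; subst; auto. Qed.

Lemma align_nil_l y c : ~ align [] y c.
Proof. intro H; inversion H. Qed.
Lemma align_nil_r x c : ~ align x [] c.
Proof. intro H; inversion H. Qed.

Ltac nilc := match goal with Hn : align [] _ _ |- _ => exfalso; exact (align_nil_l _ _ Hn) | Hn : align _ [] _ |- _ => exfalso; exact (align_nil_r _ _ Hn) end.

Lemma align_ne x y c : align x y c -> x <> [] /\ y <> [].
Proof. intro H; destruct H; split; discriminate. Qed.

Lemma align_nonneg x y c : align x y c -> 0 <= c.
Proof. induction 1; pose proof (pow2_ge_0 (a-b)); lra. Qed.

Lemma align_sym x y c : align x y c -> align y x c.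
Proof.
  induction 1.
  - apply align_eq with ((b-a)^2); [constructor|ring].
  - apply align_eq with ((b-a)^2 + c); [apply al_right; auto|ring].
  - apply align_eq with ((b-a)^2 + c); [apply al_down; auto|ring].
  - apply align_eq with ((b-a)^2 + c); [apply al_diag; auto|ring].
Qed.

Lemma align_head a b x y c : align (a::x) (b::y) c -> (a-b)^2 <= c.
Proof.
  intro H; inversion H; subst; try lra;
  match goal with Hc : align _ _ ?c0 |- _ => pose proof (align_nonneg _ _ _ Hc) end; lra.
Qed.

Lemma sq0 a b : (a-b)^2 <= 0 -> a = b.
Proof. intros; nra. Qed.

Definition good (i0 j0 m n : nat) (p : list (nat*nat)) : Prop :=
  hd_error p = Some (S i0, S j0) /\ last p (0%nat,0%nat) = ((i0+m)%nat, (j0+n)%nat) /\ wsteps p /\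
  Forall (fun ij => (i0 < fst ij <= i0+m)%nat /\ (j0 < snd ij <= j0+n)%nat) p.

Definition term (i0 j0 : nat) (x y : list R) (ij : nat*nat) : R :=
  (nth (fst ij - S i0) x 0 - nth (snd ij - S j0) y 0) ^ 2.
Definition cost' i0 j0 x y p := fold_right (fun ij acc => term i0 j0 x y ij + acc) 0 p.

Lemma fold_ext (f g : nat*nat -> R) p : Forall (fun ij => f ij = g ij) p ->
  fold_right (fun ij acc => f ij + acc) 0 p = fold_right (fun ij acc => g ij + acc) 0 p.
Proof. induction 1; simpl; [reflexivity| rewrite H, IHForall; reflexivity]. Qed.

Lemma path_cost_eq x y p : path_cost x y p = cost' 0 0 x y p.
Proof.
  unfold path_cost, cost'. apply fold_ext. apply Forall_forall. intros z _.
  unfold term. rewrite !Nat.sub_1_r. reflexivity.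
Qed.

Lemma nth_shift (a:R) x i k : (k < i)%nat -> nth (i - k) (a::x) 0 = nth (i - S k) x 0.
Proof. intros. replace (i - k)%nat with (S (i - S k)) by lia. reflexivity. Qed.

Lemma cost_shift_x i0 j0 a x y p : Forall (fun z => S i0 < fst z)%nat p ->
  cost' i0 j0 (a::x) y p = cost' (S i0) j0 x y p.
Proof.
  intro H. unfold cost'. apply fold_ext. eapply Forall_impl; [|exact H].
  intros z Hz. cbv beta in Hz. unfold term. rewrite nth_shift by lia. reflexivity.
Qed.

Lemma cost_shift_y i0 j0 x b y p : Forall (fun z => S j0 < snd z)%nat p ->
  cost' i0 j0 x (b::y) p = cost' i0 (S j0) x y p.
Proof.
  intro H. unfold cost'. apply fold_ext. eapply Forall_impl; [|exact H].
  intros z Hz. cbv beta in Hz. unfold term. rewrite (nth_shift b) by lia. reflexivity.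
Qed.

Lemma term_first i0 j0 a b x y : term i0 j0 (a::x) (b::y) (S i0, S j0) = (a-b)^2.
Proof. unfold term; simpl fst; simpl snd. rewrite !Nat.sub_diag. reflexivity. Qed.

Lemma cost_cons i0 j0 x y r p : cost' i0 j0 x y (r::p) = term i0 j0 x y r + cost' i0 j0 x y p.
Proof. reflexivity. Qed.

Lemma last_cons2 (r q : nat*nat) p d : last (r::q::p) d = last (q::p) d.
Proof. reflexivity. Qed.

Lemma wsteps_mono : forall p q, wsteps (q::p) ->
  Forall (fun r => fst q <= fst r /\ snd q <= snd r)%nat (q::p).
Proof.
  induction p as [|r p IH]; intros q H.
  - constructor; [lia|constructor].
  - destruct H as [Hs Hw]. specialize (IH r Hw).
    constructor; [lia|].
    eapply Forall_impl; [|exact IH]. intros z Hz.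
    cbv beta in *; destruct Hs as [[H1 H2]|[[H1 H2]|[H1 H2]]]; lia.
Qed.

Lemma path_align : forall p i0 j0 x y, good i0 j0 (length x) (length y) p ->
  align x y (cost' i0 j0 x y p).
Proof.
  induction p as [|r p IH]; intros i0 j0 x y [Hhd [Hlast [Hws Hfa]]].
  - discriminate.
  - simpl in Hhd. inversion Hhd; subst r.
    inversion Hfa as [|? ? [Hb1 Hb2] Hfa']; subst. simpl in Hb1, Hb2.
    destruct x as [|a x']; [simpl in Hb1; lia|].
    destruct y as [|b y']; [simpl in Hb2; lia|].
    destruct p as [|q p'].
    + simpl in Hlast. inversion Hlast as [[E1 E2]].
      simpl in E1, E2.
      destruct x'; [|simpl in E1; lia]. destruct y'; [|simpl in E2; lia].
      unfold cost'; simpl fold_right. rewrite term_first.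
      apply align_eq with ((a-b)^2); [constructor|ring].
    + pose proof (wsteps_mono _ _ (proj2 Hws)) as Hm.
      destruct Hws as [Hs Hws].
      rewrite last_cons2 in Hlast.
      rewrite cost_cons, term_first.
      assert (Hfb : forall z, In z (q::p') -> (i0 < fst z <= i0 + length (a::x'))%nat /\
          (j0 < snd z <= j0 + length (b::y'))%nat /\ (fst q <= fst z)%nat /\ (snd q <= snd z)%nat).
      { intros z Hz. rewrite Forall_forall in Hfa', Hm.
        specialize (Hfa' z Hz); specialize (Hm z Hz). tauto. }
      simpl length in *.
      destruct q as [qi qj]. simpl in Hs, Hfb.
      destruct Hs as [[H1 H2]|[[H1 H2]|[H1 H2]]]; simpl in H1, H2; subst qi qj.
      * rewrite cost_shift_x.
        2:{ apply Forall_forall; intros z Hz; specialize (Hfb z Hz); lia. }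
        apply al_down. apply IH. refine (conj eq_refl (conj _ (conj Hws _))).
        -- rewrite Hlast. f_equal; simpl; lia.
        -- apply Forall_forall; intros z Hz; specialize (Hfb z Hz); simpl; lia.
      * rewrite cost_shift_y.
        2:{ apply Forall_forall; intros z Hz; specialize (Hfb z Hz); lia. }
        apply al_right. apply IH. refine (conj eq_refl (conj _ (conj Hws _))).
        -- rewrite Hlast. f_equal; simpl; lia.
        -- apply Forall_forall; intros z Hz; specialize (Hfb z Hz); simpl; lia.
      * rewrite cost_shift_x.
        2:{ apply Forall_forall; intros z Hz; specialize (Hfb z Hz); lia. }
        rewrite cost_shift_y.
        2:{ apply Forall_forall; intros z Hz; specialize (Hfb z Hz); lia. }
        apply al_diag. apply IH. refine (conj eq_refl (conj _ (conj Hws _))).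
        -- rewrite Hlast. f_equal; simpl; lia.
        -- apply Forall_forall; intros z Hz; specialize (Hfb z Hz); simpl; lia.
Qed.

Lemma align_path x y c : align x y c -> forall i0 j0, exists p,
  good i0 j0 (length x) (length y) p /\ cost' i0 j0 x y p = c.
Proof.
  induction 1; intros i0 j0.
  - exists [(S i0, S j0)]. split.
    + refine (conj eq_refl (conj _ (conj I _))).
      * simpl. f_equal; lia.
      * constructor; [simpl; lia|constructor].
    + rewrite cost_cons, term_first. unfold cost'; simpl. ring.
  - destruct (IHalign (S i0) j0) as [p [[Hh [Hl [Hw Hf]]] Hc]].
    destruct p as [|q p']; [discriminate|]. simpl in Hh. inversion Hh; subst q.
    exists ((S i0, S j0) :: (S (S i0), S j0) :: p'). split.
    + refine (conj eq_refl (conj _ (conj _ _))).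
      * rewrite last_cons2, Hl. simpl. f_equal; lia.
      * split; [left; simpl; auto|exact Hw].
      * constructor; [simpl; lia|]. eapply Forall_impl; [|exact Hf].
        intros z Hz; simpl in *; lia.
    + rewrite cost_cons, term_first, cost_shift_x, Hc; [reflexivity|].
      eapply Forall_impl; [|exact Hf]. intros z Hz; simpl in *; lia.
  - destruct (IHalign i0 (S j0)) as [p [[Hh [Hl [Hw Hf]]] Hc]].
    destruct p as [|q p']; [discriminate|]. simpl in Hh. inversion Hh; subst q.
    exists ((S i0, S j0) :: (S i0, S (S j0)) :: p'). split.
    + refine (conj eq_refl (conj _ (conj _ _))).
      * rewrite last_cons2, Hl. simpl. f_equal; lia.
      * split; [right; left; simpl; auto|exact Hw].
      * constructor; [simpl; lia|]. eapply Forall_impl; [|exact Hf].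
        intros z Hz; simpl in *; lia.
    + rewrite cost_cons, term_first, cost_shift_y, Hc; [reflexivity|].
      eapply Forall_impl; [|exact Hf]. intros z Hz; simpl in *; lia.
  - destruct (IHalign (S i0) (S j0)) as [p [[Hh [Hl [Hw Hf]]] Hc]].
    destruct p as [|q p']; [discriminate|]. simpl in Hh. inversion Hh; subst q.
    exists ((S i0, S j0) :: (S (S i0), S (S j0)) :: p'). split.
    + refine (conj eq_refl (conj _ (conj _ _))).
      * rewrite last_cons2, Hl. simpl. f_equal; lia.
      * split; [right; right; simpl; auto|exact Hw].
      * constructor; [simpl; lia|]. eapply Forall_impl; [|exact Hf].
        intros z Hz; simpl in *; lia.
    + rewrite cost_cons, term_first, cost_shift_x, cost_shift_y, Hc; [reflexivity| |].
      * eapply Forall_impl; [|exact Hf]. intros z Hz; simpl in *; lia.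
      * eapply Forall_impl; [|exact Hf]. intros z Hz; simpl in *; lia.
Qed.

Lemma align_min : forall n x y, (length x + length y <= n)%nat -> x <> [] -> y <> [] ->
  exists c, align x y c /\ forall c', align x y c' -> c <= c'.
Proof.
  induction n; intros x y Hl Hx Hy.
  - destruct x; [congruence|]. simpl in Hl; lia.
  - destruct x as [|a x']; [congruence|]. destruct y as [|b y']; [congruence|].
    simpl in Hl.
    destruct x' as [|a' x''], y' as [|b' y''].
    + exists ((a-b)^2). split; [constructor|].
      intros c' H; inversion H; subst; try lra; try (nilc; fail).
    + destruct (IHn [a] (b'::y'')) as [c1 [H1 M1]]; [simpl in *; lia|congruence|congruence|].
      exists ((a-b)^2 + c1). split; [apply al_right; auto|].
      intros c' H; inversion H; subst;
      try (nilc; fail).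
      pose proof (M1 _ ltac:(eassumption)); lra.
    + destruct (IHn (a'::x'') [b]) as [c1 [H1 M1]]; [simpl in *; lia|congruence|congruence|].
      exists ((a-b)^2 + c1). split; [apply al_down; auto|].
      intros c' H; inversion H; subst;
      try (nilc; fail).
      pose proof (M1 _ ltac:(eassumption)); lra.
    + destruct (IHn (a'::x'') (b::b'::y'')) as [c1 [H1 M1]]; [simpl in *; lia|congruence|congruence|].
      destruct (IHn (a::a'::x'') (b'::y'')) as [c2 [H2 M2]]; [simpl in *; lia|congruence|congruence|].
      destruct (IHn (a'::x'') (b'::y'')) as [c3 [H3 M3]]; [simpl in *; lia|congruence|congruence|].
      exists ((a-b)^2 + Rmin c1 (Rmin c2 c3)). split.
      * apply (Rmin_case c1 (Rmin c2 c3) (fun m => align _ _ ((a-b)^2 + m))); [apply al_down; auto|].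
        apply (Rmin_case c2 c3 (fun m => align _ _ ((a-b)^2 + m))); [apply al_right|apply al_diag]; auto.
      * pose proof (Rmin_l c1 (Rmin c2 c3)); pose proof (Rmin_r c1 (Rmin c2 c3));
        pose proof (Rmin_l c2 c3); pose proof (Rmin_r c2 c3).
        intros c' Hal; inversion Hal; subst;
        [pose proof (M1 _ ltac:(eassumption)) | pose proof (M2 _ ltac:(eassumption))
        | pose proof (M3 _ ltac:(eassumption))]; lra.
Qed.

Lemma dtw_char x y : x <> [] -> y <> [] -> exists c, align x y c /\
  (forall c', align x y c' -> c <= c') /\ dtw x y = sqrt c.
Proof.
  intros Hx Hy.
  destruct (align_min (length x + length y) x y (le_n _) Hx Hy) as [c [Hc Hmin]].
  exists c; split; auto; split; auto.
  assert (His: is_dtw x y (sqrt c)).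
  { split.
    - destruct (align_path _ _ _ Hc 0 0) as [p [Hg Hcost]]. exists p. split.
      + exact Hg.
      + rewrite path_cost_eq, Hcost. reflexivity.
    - intros p Hp. apply sqrt_le_1_alt. apply Hmin. rewrite path_cost_eq. apply path_align. exact Hp. }
  unfold dtw.
  destruct (epsilon_spec (inhabits 0) (is_dtw x y) (ex_intro _ _ His)) as [[p [Hp Hd]] Hlow].
  destruct His as [[p0 [Hp0 Hd0]] Hlow0].
  apply Rle_antisym.
  - rewrite Hd0. apply Hlow. exact Hp0.
  - rewrite Hd. apply Hlow0. exact Hp.
Qed.

Fixpoint irred (l : list R) : Prop :=
  match l with
  | a :: ((b :: _) as t) => a <> b /\ irred t
  | _ => True
  end.

Lemma cond_cons a x : condense (a::x) =
  match condense x with [] => [a] | b :: t => if Req_EM_T a b then b :: t else a :: b :: t end.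
Proof. reflexivity. Qed.

Lemma cond_nil x : condense x = [] -> x = [].
Proof.
  destruct x as [|a x]; auto. rewrite cond_cons.
  destruct (condense x); [discriminate|]. destruct Req_EM_T; discriminate.
Qed.

Lemma cond_hd a x : exists t, condense (a::x) = a :: t.
Proof.
  rewrite cond_cons. destruct (condense x) as [|b t].
  - eauto.
  - destruct Req_EM_T; subst; eauto.
Qed.

Lemma cond_cases a x : (exists t, condense x = a :: t /\ condense (a::x) = a :: t) \/
  condense (a::x) = a :: condense x.
Proof.
  rewrite cond_cons. destruct (condense x) as [|b t].
  - right; reflexivity.
  - destruct Req_EM_T; subst; [left; eauto|right; reflexivity].
Qed.

Lemma cond_irred x : irred (condense x).
Proof.
  induction x as [|a x IH]; [simpl; auto|].
  rewrite cond_cons. destruct (condense x) as [|b t]; [simpl; auto|].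
  destruct Req_EM_T; [exact IH|]. simpl. split; auto.
Qed.

Lemma irred_tail a x : irred (a::x) -> irred x.
Proof. destruct x; simpl; tauto. Qed.

Lemma irred_cond l : irred l -> condense l = l.
Proof.
  induction l as [|a l IH]; intro H; [reflexivity|].
  rewrite cond_cons, (IH (irred_tail _ _ H)).
  destruct l as [|b t]; [reflexivity|]. destruct H as [Hab _].
  destruct Req_EM_T; [contradiction|reflexivity].
Qed.

Lemma align_proj x y c : align x y c -> exists c', c' <= c /\ align (condense x) (condense y) c'.
Proof.
  induction 1.
  - exists ((a-b)^2). split; [lra|constructor].
  - destruct IHalign as [c1 [Hle H1]]. pose proof (pow2_ge_0 (a-b)).
    destruct (cond_cases a x) as [[t [E1 E2]]|E].
    + exists c1. rewrite E2. rewrite E1 in H1. split; [lra|exact H1].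
    + destruct (cond_hd b y) as [s Es]. rewrite Es in H1 |- *. rewrite E.
      exists ((a-b)^2 + c1). split; [lra|apply al_down; exact H1].
  - destruct IHalign as [c1 [Hle H1]]. pose proof (pow2_ge_0 (a-b)).
    destruct (cond_cases b y) as [[t [E1 E2]]|E].
    + exists c1. rewrite E2. rewrite E1 in H1. split; [lra|exact H1].
    + destruct (cond_hd a x) as [s Es]. rewrite Es in H1 |- *. rewrite E.
      exists ((a-b)^2 + c1). split; [lra|apply al_right; exact H1].
  - destruct IHalign as [c1 [Hle H1]]. pose proof (pow2_ge_0 (a-b)).
    destruct (cond_cases a x) as [[t [E1 E2]]|E];
    destruct (cond_cases b y) as [[s [F1 F2]]|F].
    + exists c1. rewrite E2, F2. rewrite E1, F1 in H1. split; [lra|exact H1].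
    + exists ((a-b)^2 + c1). rewrite E2, F. rewrite E1 in H1. split; [lra|apply al_right; exact H1].
    + exists ((a-b)^2 + c1). rewrite E, F2. rewrite F1 in H1. split; [lra|apply al_down; exact H1].
    + exists ((a-b)^2 + c1). rewrite E, F. split; [lra|apply al_diag; exact H1].
Qed.

Lemma align_zero x y c : align x y c -> c = 0 -> irred x -> irred y -> x = y.
Proof.
  induction 1; intros Hc Ix Iy.
  - pose proof (pow2_ge_0 (a-b)). rewrite (sq0 a b) by lra. reflexivity.
  - pose proof (pow2_ge_0 (a-b)). pose proof (align_nonneg _ _ _ H).
    destruct x as [|a' x']; [nilc|].
    assert (c = 0) by lra. subst c.
    pose proof (sq0 _ _ (align_head _ _ _ _ _ H)). pose proof (sq0 a b ltac:(lra)).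
    simpl in Ix. destruct Ix. congruence.
  - pose proof (pow2_ge_0 (a-b)). pose proof (align_nonneg _ _ _ H).
    destruct y as [|b' y']; [nilc|].
    assert (c = 0) by lra. subst c.
    pose proof (sq0 _ _ (align_head _ _ _ _ _ H)). pose proof (sq0 a b ltac:(lra)).
    simpl in Iy. destruct Iy. congruence.
  - pose proof (pow2_ge_0 (a-b)). pose proof (align_nonneg _ _ _ H).
    rewrite (sq0 a b) by lra. f_equal. apply IHalign; [lra|eapply irred_tail; eauto|eapply irred_tail; eauto].
Qed.

Lemma cond_eq_align : forall n x y, (length x + length y <= n)%nat -> x <> [] -> y <> [] ->
  condense x = condense y -> align x y 0.
Proof.
  induction n; intros x y Hl Hx Hy E.
  - destruct x; [congruence|]. simpl in Hl; lia.
  - destruct x as [|a x']; [congruence|]. destruct y as [|b y']; [congruence|].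
    simpl in Hl.
    assert (a = b).
    { destruct (cond_hd a x') as [t Et]; destruct (cond_hd b y') as [s Es]. congruence. }
    subst b.
    destruct (cond_cases a x') as [[t [E1 E2]]|E'].
    + apply align_eq with ((a-a)^2 + 0); [|ring]. apply al_down. apply IHn.
      * simpl in *; lia.
      * intro; subst; discriminate.
      * congruence.
      * congruence.
    + destruct (cond_cases a y') as [[s [F1 F2]]|F'].
      * apply align_eq with ((a-a)^2 + 0); [|ring]. apply al_right. apply IHn.
        -- simpl in *; lia.
        -- congruence.
        -- intro; subst; discriminate.
        -- congruence.
      * rewrite E', F' in E. inversion E as [E0].
        destruct x' as [|a1 x1]; destruct y' as [|b1 y1].
        -- apply align_eq with ((a-a)^2); [constructor|ring].
        -- symmetry in E0. apply cond_nil in E0; discriminate.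
        -- apply cond_nil in E0; discriminate.
        -- apply align_eq with ((a-a)^2 + 0); [|ring]. apply al_diag. apply IHn; auto.
           ++ simpl in *; lia.
           ++ discriminate.
           ++ discriminate.
Qed.

Lemma dtw0_iff x y : x <> [] -> y <> [] -> (dtw x y = 0 <-> condense x = condense y).
Proof.
  intros Hx Hy. destruct (dtw_char x y Hx Hy) as [c [Hc [Hmin Hd]]]. rewrite Hd.
  pose proof (align_nonneg _ _ _ Hc).
  split.
  - intro H0. apply sqrt_eq_0 in H0; auto. subst c.
    destruct (align_proj _ _ _ Hc) as [c' [Hle H']].
    pose proof (align_nonneg _ _ _ H').
    rewrite <- (irred_cond (condense x)) by apply cond_irred.
    rewrite <- (irred_cond (condense y)) by apply cond_irred.
    f_equal. eapply align_zero; eauto using cond_irred. lra.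
  - intro E. pose proof (Hmin _ (cond_eq_align _ x y (le_n _) Hx Hy E)).
    replace c with 0 by lra. apply sqrt_0.
Qed.

Lemma dtw_nonneg x y : x <> [] -> y <> [] -> 0 <= dtw x y.
Proof. intros Hx Hy. destruct (dtw_char x y Hx Hy) as [c [_ [_ ->]]]. apply sqrt_pos. Qed.

Lemma dtw_sym x y : x <> [] -> y <> [] -> dtw x y = dtw y x.
Proof.
  intros Hx Hy. destruct (dtw_char x y Hx Hy) as [c [Hc [Hm ->]]].
  destruct (dtw_char y x Hy Hx) as [c' [Hc' [Hm' ->]]].
  f_equal. apply Rle_antisym; [apply Hm; apply align_sym; auto|apply Hm'; apply align_sym; auto].
Qed.

Lemma cond_ne x : x <> [] -> condense x <> [].
Proof. intros H E. apply H, cond_nil, E. Qed.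

Lemma dtw_cond_le x y : x <> [] -> y <> [] -> dtw (condense x) (condense y) <= dtw x y.
Proof.
  intros Hx Hy. destruct (dtw_char x y Hx Hy) as [c [Hc [Hm ->]]].
  destruct (dtw_char (condense x) (condense y) (cond_ne _ Hx) (cond_ne _ Hy)) as [c' [Hc' [Hm' ->]]].
  apply sqrt_le_1_alt. destruct (align_proj _ _ _ Hc) as [c1 [Hle H1]].
  pose proof (Hm' _ H1). lra.
Qed.

Lemma ts_ne (x : ts) : proj1_sig x <> [].
Proof. destruct x as [l Hl]; simpl; intro; subst; simpl in Hl; lia. Qed.

Lemma widen_iff (x y : ts) : widen x y <-> condense (proj1_sig x) = condense (proj1_sig y).
Proof. unfold widen. apply dtw0_iff; apply ts_ne. Qed.

Lemma cond_len (x : list R) : (1 <= length x)%nat -> (1 <= length (condense x))%nat.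
Proof.
  intro H. destruct (condense x) eqn:E.
  - apply cond_nil in E; subst; simpl in H; lia.
  - simpl; lia.
Qed.

Definition tcond (x : ts) : ts := exist _ (condense (proj1_sig x)) (cond_len _ (proj2_sig x)).

Lemma twi_val (x y : ts) :
  is_glb (twi_set (cls x) (cls y)) (dtw (condense (proj1_sig x)) (condense (proj1_sig y))).
Proof.
  split.
  - intros s [x' [y' [Hx' [Hy' ->]]]]. unfold cls in Hx', Hy'.
    apply widen_iff in Hx', Hy'. rewrite Hx', Hy'. apply dtw_cond_le; apply ts_ne.
  - intros b Hb. apply Hb. exists (tcond x), (tcond y).
    split; [|split]; [| |reflexivity]; unfold cls; apply widen_iff; simpl;
    rewrite (irred_cond (condense _)) by apply cond_irred; reflexivity.
Qed.

Lemma glb_unique S r1 r2 : is_glb S r1 -> is_glb S r2 -> r1 = r2.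
Proof. intros [A1 B1] [A2 B2]. apply Rle_antisym; [apply B2, A1|apply B1, A2]. Qed.

Lemma twi_eq (x y : ts) : twi (toT x) (toT y) = dtw (condense (proj1_sig x)) (condense (proj1_sig y)).
Proof.
  change (epsilon (inhabits 0) (is_glb (twi_set (cls x) (cls y))) = dtw (condense (proj1_sig x)) (condense (proj1_sig y))).
  eapply glb_unique; [|apply twi_val].
  apply epsilon_spec. exists (dtw (condense (proj1_sig x)) (condense (proj1_sig y))); apply twi_val.
Qed.

Lemma Tstar_rep (A : Tstar) : exists x, A = toT x.
Proof.
  destruct A as [P HP]. pose proof HP as [x Hx]. exists x. unfold toT. subst P.
  f_equal. apply proof_irrelevance.
Qed.

Lemma sig_eq (P : (ts -> Prop) -> Prop) a b (pa : P a) (pb : P b) : a = b -> exist P a pa = exist P b pb.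
Proof. intros; subst; f_equal; apply proof_irrelevance. Qed.

Theorem theorem1 :
  (* well defined: the infimum exists and depends only on the classes *)
  (forall x x' y y' : ts, widen x x' -> widen y y' ->
     twi (toT x) (toT y) = twi (toT x') (toT y')) /\
  (forall x y : ts, exists r, is_glb (twi_set (cls x) (cls y)) r) /\
  (* semi-metric on T^* *)
  (semi_metric Tstar twi) /\
  (* twi([x],[y]) = dtw(condense x, condense y) *)
  (forall x y : ts,
     twi (toT x) (toT y) = dtw (condense (proj1_sig x)) (condense (proj1_sig y))).
Proof.
  split; [|split; [|split]].
  - intros x x' y y' Hx Hy. rewrite !twi_eq. apply widen_iff in Hx, Hy. rewrite Hx, Hy. reflexivity.
  - intros x y. eexists; apply twi_val.
  - split; [|split].
    + intros A B. destruct (Tstar_rep A) as [x ->]. destruct (Tstar_rep B) as [y ->].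
      rewrite twi_eq. apply dtw_nonneg; apply cond_ne, ts_ne.
    + intros A B. destruct (Tstar_rep A) as [x ->]. destruct (Tstar_rep B) as [y ->].
      split.
      * rewrite twi_eq. intro H0. apply dtw0_iff in H0; try (apply cond_ne, ts_ne).
        rewrite !irred_cond in H0 by apply cond_irred.
        unfold toT. apply sig_eq.
        extensionality z. apply propositional_extensionality. unfold cls.
        rewrite !widen_iff, H0, (irred_cond (condense _)) by apply cond_irred. tauto.
      * intro E. rewrite E, twi_eq. apply dtw0_iff; try (apply cond_ne, ts_ne). reflexivity.
    + intros A B. destruct (Tstar_rep A) as [x ->]. destruct (Tstar_rep B) as [y ->].
      rewrite !twi_eq. apply dtw_sym; apply cond_ne, ts_ne.
  - apply twi_eq.
Qed.
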